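(* Let $\mathcal{H}$ be an $n$-dimensional (real or complex) Hilbert space, let $F=\{f_i\}_{i=1}^N$ be a frame for $\mathcal{H}$ with frame operator $S_F$, and let $\{q_i\}_{i=1}^N$ be the weight number sequence associated with a probability sequence $\{p_i\}_{i=1}^N$. Let $l=\max_{1\le i\le N}\{q_i\|S_F^{-1/2}f_i\|^2+q_i\|f_i\|\,\|S_F^{-1}f_i\|\}$, $\Lambda_1=\{i: q_i\|S_F^{-1/2}f_i\|^2+q_i\|f_i\|\,\|S_F^{-1}f_i\|=l\}$, $\Lambda_2=\{1,\dots,N\}\setminus\Lambda_1$, and $H_j=\operatorname{span}\{f_i:i\in\Lambda_j\}$ for $j=1,2$. If $H_1\cap H_2=\{0\}$ and $\{f_i\}_{i\in\Lambda_1}$ is linearly independent, then $S_F^{-1}F\in\Delta_F^{(1)}$. Moreover, if in addition $N>n$, then $S_F^{-1}F$ is not the unique 1-erasure PASOD-frame of $F$.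
   Context: A finite sequence $F=\{f_i\}_{i=1}^N$ in $\mathcal{H}$ is a frame if there are $A,B>0$ with $A\|f\|^2\le\sum_{i=1}^N|\langle f,f_i\rangle|^2\le B\|f\|^2$ for all $f$. The frame operator is $S_Ff=\sum_{i=1}^N\langle f,f_i\rangle f_i$ (positive invertible) and the canonical dual is $S_F^{-1}F=\{S_F^{-1}f_i\}_{i=1}^N$. A frame $G=\{g_i\}_{i=1}^N$ is a dual of $F$ if $f=\sum_i\langle f,f_i\rangle g_i=\sum_i\langle f,g_i\rangle f_i$ for all $f$. A probability sequence is $\{p_i\}_{i=1}^N$ with $0\le p_i\le1$, $\sum p_i=1$; weight numbers $q_i=\frac{\sum_{j} p_j}{\sum_{j} p_j-p_i}\cdot\frac{N-1}{n}$. For $\Lambda\subseteq\{1,\dots,N\}$ the error operator is $E_{\Lambda,(F,G)}f=\sum_{i\in\Lambda}q_i\langle f,f_i\rangle g_i$. Set $\mathcal{A}_P^{(1)}(F,G)=\max_{|\Lambda|=1}\frac{\|E_{\Lambda,(F,G)}\|+\rho(E_{\Lambda,(F,G)})}{2}$ (operator norm and spectral radius). $\Delta_F^{(1)}$ is the set of duals $G$ of $F$ minimizing $\mathcal{A}_P^{(1)}(F,\cdot)$ over all duals of $F$ (1-erasure PASOD-frames of $F$). *)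

(* Defs.v *)
From HB Require Import structures.
From mathcomp Require Import all_boot all_order all_algebra.
From mathcomp Require Import complex.
From mathcomp Require Import boolp classical_sets reals.
Set Implicit Arguments. Unset Strict Implicit. Unset Printing Implicit Defensive.
Import Order.TTheory GRing.Theory Num.Theory.
Local Open Scope ring_scope.

Section FrameDefs.
Variable R : realType.
Local Notation C := (R[i]).

(* The Hilbert space: C^n (isreal = false) or R^n seen inside C^n (isreal = true). *)
Definition realc (z : C) : bool := complex.Im z == 0.
Definition inH {n : nat} (isreal : bool) (v : 'cV[C]_n) : bool :=
  isreal ==> [forall k, realc (v k 0)].
Definition scal (isreal : bool) (c : C) : bool := isreal ==> realc c.

Definition ctr {m p : nat} (A : 'M[C]_(m, p)) : 'M[C]_(p, m) := map_mx conjc A^T.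

Definition dot {n : nat} (u v : 'cV[C]_n) : C := \sum_k u k 0 * conjc (v k 0).
Definition vnorm {n : nat} (u : 'cV[C]_n) : R := Num.sqrt (\sum_k Normc.normc (u k 0) ^+ 2).

Definition is_frame {n N : nat} (isreal : bool) (F : 'I_N -> 'cV[C]_n) : Prop :=
  (forall i, inH isreal (F i)) /\
  exists A B : R, 0 < A /\ 0 < B /\
    forall f : 'cV[C]_n, inH isreal f ->
      A * vnorm f ^+ 2 <= \sum_i Normc.normc (dot f (F i)) ^+ 2 <= B * vnorm f ^+ 2.

(* frame operator S_F f = sum_i <f, f_i> f_i, as a matrix *)
Definition frameop {n N : nat} (F : 'I_N -> 'cV[C]_n) : 'M[C]_n :=
  \sum_i (F i *m ctr (F i)).

Definition candual {n N : nat} (F : 'I_N -> 'cV[C]_n) : 'I_N -> 'cV[C]_n :=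
  fun i => invmx (frameop F) *m F i.

Definition is_dual {n N : nat} (isreal : bool) (F G : 'I_N -> 'cV[C]_n) : Prop :=
  is_frame isreal G /\
  forall f : 'cV[C]_n, inH isreal f ->
    f = \sum_i dot f (F i) *: G i /\ f = \sum_i dot f (G i) *: F i.

Definition is_prob_seq {N : nat} (p : 'I_N -> R) : Prop :=
  (forall i, 0 <= p i <= 1) /\ \sum_i p i = 1.

Definition weight {N : nat} (n : nat) (p : 'I_N -> R) (i : 'I_N) : R :=
  (\sum_j p j) / (\sum_j p j - p i) * ((N - 1)%:R / n%:R).

(* error operator E_{Lambda,(F,G)} f = sum_{i in Lambda} q_i <f, f_i> g_i *)
Definition errop {n N : nat} (q : 'I_N -> R) (F G : 'I_N -> 'cV[C]_n)
  (L : {set 'I_N}) : 'M[C]_n :=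
  \sum_(i in L) (Complex (q i) 0) *: (G i *m ctr (F i)).

Definition opnorm {n : nat} (isreal : bool) (A : 'M[C]_n) : R :=
  sup (fun r : R => exists2 f : 'cV[C]_n, inH isreal f /\ vnorm f <= 1 &
                                            r = vnorm (A *m f)).

Definition specrad {n : nat} (A : 'M[C]_n) : R :=
  sup (fun r : R => exists2 a : C, eigenvalue A a & r = Normc.normc a).

Definition AP1 {n N : nat} (isreal : bool) (q : 'I_N -> R) (F G : 'I_N -> 'cV[C]_n) : R :=
  \big[Num.max/0]_(L : {set 'I_N} | #|L| == 1%N)
     ((opnorm isreal (errop q F G L) + specrad (errop q F G L)) / 2).

Definition PASOD1 {n N : nat} (isreal : bool) (q : 'I_N -> R) (F G : 'I_N -> 'cV[C]_n) : Prop :=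
  is_dual isreal F G /\
  forall G' : 'I_N -> 'cV[C]_n, is_dual isreal F G' -> AP1 isreal q F G <= AP1 isreal q F G'.

Definition psd {n : nat} (P : 'M[C]_n) : Prop :=
  ctr P = P /\ forall v : 'cV[C]_n, 0 <= (ctr v *m P *m v) 0 0.

Definition inspan {n N : nat} (isreal : bool) (F : 'I_N -> 'cV[C]_n)
  (L : {set 'I_N}) (v : 'cV[C]_n) : Prop :=
  exists c : 'I_N -> C, (forall i, scal isreal (c i)) /\ v = \sum_(i in L) c i *: F i.

Definition linindep {n N : nat} (isreal : bool) (F : 'I_N -> 'cV[C]_n)
  (L : {set 'I_N}) : Prop :=
  forall c : 'I_N -> C, (forall i, scal isreal (c i)) ->
    \sum_(i in L) c i *: F i = 0 -> forall i, i \in L -> c i = 0.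

End FrameDefs.

(* Main.v *)
Require Import Defs.
From HB Require Import structures.
From mathcomp Require Import all_boot all_order all_algebra.
From mathcomp Require Import complex.
From mathcomp Require Import ring lra.
From mathcomp Require Import boolp classical_sets reals.
Import Order.TTheory GRing.Theory Num.Theory.
Local Open Scope ring_scope.

Set Implicit Arguments. Unset Strict Implicit. Unset Printing Implicit Defensive.

Section A.
Variable R : realType.
Local Notation C := (R[i]).
Local Notation rc := (real_complex R).
Local Notation nc := (@Normc.normc R).

Lemma conjcK' (x : C) : conjc (conjc x) = x.
Proof. by case: x => a b; rewrite /conjc opprK. Qed.

Lemma normcC (z : C) : (nc z)%:C%C = `|z|.
Proof. by case: z => a b; rewrite normc_def. Qed.

Lemma mulcJ_norm (z : C) : z * conjc z = ((nc z) ^+ 2)%:C%C.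
Proof. by rewrite rmorphXn /= normcC sqr_normc. Qed.

Lemma normc_ge0 (z : C) : 0 <= nc z.
Proof. by case: z => a b; rewrite /= sqrtr_ge0. Qed.

Lemma normc_real (x : R) : nc (x%:C%C) = `|x|.
Proof. by rewrite /= expr0n /= addr0 sqrtr_sqr. Qed.

Lemma dotE n (u v : 'cV[C]_n) : dot u v = (ctr v *m u) 0 0.
Proof. by rewrite /dot !mxE; apply: eq_bigr => k _; rewrite !mxE mulrC. Qed.

Lemma ctrM m p r (A : 'M[C]_(m, p)) (B : 'M[C]_(p, r)) : ctr (A *m B) = ctr B *m ctr A.
Proof. by rewrite /ctr trmx_mul map_mxM. Qed.

Lemma ctrK m p (A : 'M[C]_(m, p)) : ctr (ctr A) = A.
Proof. by apply/matrixP => i j; rewrite !mxE conjcK'. Qed.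

Lemma ctrD m p (A B : 'M[C]_(m, p)) : ctr (A + B) = ctr A + ctr B.
Proof. by apply/matrixP => i j; rewrite !mxE rmorphD. Qed.

Lemma ctrZ m p (a : C) (A : 'M[C]_(m, p)) : ctr (a *: A) = conjc a *: ctr A.
Proof. by apply/matrixP => i j; rewrite !mxE rmorphM. Qed.

Lemma ctr_sum m p (I : finType) (P : pred I) (F : I -> 'M[C]_(m, p)) :
  ctr (\sum_(i | P i) F i) = \sum_(i | P i) ctr (F i).
Proof.
by apply/matrixP => i j; rewrite !mxE !summxE rmorph_sum; apply: eq_bigr => k _; rewrite !mxE.
Qed.

Lemma dotDl n (u v w : 'cV[C]_n) : dot (u + v) w = dot u w + dot v w.
Proof. by rewrite !dotE mulmxDr mxE. Qed.

Lemma dotZl n a (u w : 'cV[C]_n) : dot (a *: u) w = a * dot u w.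
Proof. by rewrite !dotE -scalemxAr mxE. Qed.

Lemma dotNl n (u w : 'cV[C]_n) : dot (- u) w = - dot u w.
Proof. by rewrite -scaleN1r dotZl mulN1r. Qed.

Lemma dotBl n (u v w : 'cV[C]_n) : dot (u - v) w = dot u w - dot v w.
Proof. by rewrite dotDl dotNl. Qed.

Lemma dot_suml n (I : finType) (P : pred I) (F : I -> 'cV[C]_n) w :
  dot (\sum_(i | P i) F i) w = \sum_(i | P i) dot (F i) w.
Proof.
elim/big_rec2: _ => [|i x y _ <-]; first by rewrite /dot big1 // => k _; rewrite mxE mul0r.
by rewrite dotDl.
Qed.

Lemma dotC n (u v : 'cV[C]_n) : dot v u = conjc (dot u v).
Proof. by rewrite /dot rmorph_sum; apply: eq_bigr => k _; rewrite rmorphM /= conjcK' mulrC. Qed.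

Lemma dotDr n (u v w : 'cV[C]_n) : dot w (u + v) = dot w u + dot w v.
Proof. by rewrite dotC dotDl rmorphD /= -!dotC. Qed.

Lemma dotZr n a (u w : 'cV[C]_n) : dot w (a *: u) = conjc a * dot w u.
Proof. by rewrite dotC dotZl rmorphM /= -dotC. Qed.

Lemma dotBr n (u v w : 'cV[C]_n) : dot w (u - v) = dot w u - dot w v.
Proof. by rewrite dotC dotBl rmorphB /= -!dotC. Qed.

Lemma dot_sumr n (I : finType) (P : pred I) (F : I -> 'cV[C]_n) w :
  dot w (\sum_(i | P i) F i) = \sum_(i | P i) conjc (dot (F i) w).
Proof. by rewrite dotC dot_suml rmorph_sum. Qed.

Lemma dot0l n (w : 'cV[C]_n) : dot 0 w = 0.
Proof. by rewrite -(scale0r 0) dotZl mul0r. Qed.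

Lemma dot0r n (w : 'cV[C]_n) : dot w 0 = 0.
Proof. by rewrite dotC dot0l rmorph0. Qed.

Lemma dot_mulr n (M : 'M[C]_n) (u v : 'cV[C]_n) : dot u (M *m v) = dot (ctr M *m u) v.
Proof. by rewrite !dotE ctrM mulmxA. Qed.

Lemma dot_mull n (M : 'M[C]_n) (u v : 'cV[C]_n) : dot (M *m u) v = dot u (ctr M *m v).
Proof. by rewrite dot_mulr ctrK. Qed.

Lemma vnorm_ge0 n (u : 'cV[C]_n) : 0 <= vnorm u.
Proof. exact: sqrtr_ge0. Qed.

Lemma vnorm2 n (u : 'cV[C]_n) : vnorm u ^+ 2 = \sum_k nc (u k 0) ^+ 2.
Proof. by rewrite sqr_sqrtr // sumr_ge0 // => k _; rewrite sqr_ge0. Qed.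

Lemma dot_vnorm n (u : 'cV[C]_n) : dot u u = ((vnorm u) ^+ 2)%:C%C.
Proof.
by rewrite vnorm2 rmorph_sum /dot; apply: eq_bigr => k _; rewrite mulcJ_norm.
Qed.

Lemma vnorm_eq0 n (u : 'cV[C]_n) : vnorm u = 0 -> u = 0.
Proof.
move=> h; have h2 : \sum_k nc (u k 0) ^+ 2 = 0 by rewrite -vnorm2 h expr0n.
apply/matrixP => k j; rewrite (ord1 j) mxE.
have := psumr_eq0P (fun k _ => sqr_ge0 (nc (u k 0))) h2.
by move=> /(_ k isT) /eqP; rewrite sqrf_eq0 => /eqP /Normc.eq0_normc.
Qed.

Lemma vnorm0 n : vnorm (0 : 'cV[C]_n) = 0.
Proof.
by rewrite /vnorm big1 ?sqrtr0 // => k _; rewrite mxE -(rmorph0 rc) normc_real normr0 expr0n.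
Qed.

Lemma vnorm_uniq n (u : 'cV[C]_n) y : 0 <= y -> dot u u = (y ^+ 2)%:C%C -> vnorm u = y.
Proof.
move=> y0; rewrite dot_vnorm => /complexI /eqP; rewrite eqrXn2 ?vnorm_ge0 //.
by move/eqP.
Qed.

Lemma vnormZ n a (u : 'cV[C]_n) : vnorm (a *: u) = nc a * vnorm u.
Proof.
apply: vnorm_uniq; first by rewrite mulr_ge0 ?normc_ge0 ?vnorm_ge0.
rewrite dotZl dotZr dot_vnorm mulrA mulcJ_norm -rmorphM /=.
by rewrite exprMn.
Qed.

Lemma dot_ge0 n (u : 'cV[C]_n) : 0 <= dot u u.
Proof. by rewrite dot_vnorm lecR sqr_ge0. Qed.

Lemma CS2 n (u v : 'cV[C]_n) : dot u v * conjc (dot u v) <= dot u u * dot v v.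
Proof.
have [v0|vn0] := eqVneq (vnorm v) 0.
  by rewrite (vnorm_eq0 v0) dot0r rmorph0 mulr0 dot0r mulr0.
set a := dot u v; set b := dot v v.
have bE : b = ((vnorm v) ^+ 2)%:C%C by rewrite /b dot_vnorm.
have b0 : 0 < b by rewrite bE ltcR exprn_gt0 // lt0r vn0 vnorm_ge0.
have bJ : conjc b = b by rewrite bE conjc_real.
pose t := a / b.
have := dot_ge0 (u - t *: v).
rewrite dotBl !dotBr !dotZl !dotZr -/a -/b.
have -> : dot v u = conjc a by rewrite /a dotC.
rewrite /t rmorphM /= rmorphV ?unitfE ?lt0r_neq0 //= bJ.
have bn0 : b != 0 by rewrite lt0r_neq0.
have -> : dot u u - conjc a / b * a - (a / b * conjc a - a / b * (conjc a / b * b)) =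
          dot u u - a * conjc a / b.
  by field.
rewrite subr_ge0 ler_pdivrMr //.
Qed.

Lemma CS n (u v : 'cV[C]_n) : nc (dot u v) <= vnorm u * vnorm v.
Proof.
have := CS2 u v; rewrite mulcJ_norm !dot_vnorm -rmorphM lecR -exprMn.
by rewrite ler_pXn2r // ?nnegrE ?normc_ge0 // mulr_ge0 // vnorm_ge0.
Qed.

Lemma vnormD n (u v : 'cV[C]_n) : vnorm (u + v) <= vnorm u + vnorm v.
Proof.
rewrite -(ler_pXn2r (_ : 0 < 2)%N) ?nnegrE ?addr_ge0 ?vnorm_ge0 //.
rewrite -lecR -dot_vnorm dotDl !dotDr.
have -> : dot v u = conjc (dot u v) by rewrite dotC.
rewrite !dot_vnorm.
have h : dot u v + conjc (dot u v) <= (2 * (vnorm u * vnorm v))%:C%C.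
  rewrite addcJ rmorphM rmorph_nat /= ler_pM2l ?ltr0n //.
  apply: (@le_trans _ _ (`|complex.Re (dot u v)|%:C%C)); first by rewrite lecR ler_norm.
  by apply: le_trans (normc_ge_Re _) _; rewrite -normcC lecR CS.
rewrite sqrrD !rmorphD /= -!addrA lerD2l !addrA lerD2r.
by apply: (le_trans h); rewrite rmorphM rmorph_nat /= mulr_natl mulr2n.
Qed.

Lemma ctr_mulv n (f x : 'cV[C]_n) : ctr f *m x = (dot x f)%:M.
Proof. by rewrite [LHS]mx11_scalar dotE. Qed.

Lemma rank1_mul n (g f x : 'cV[C]_n) : (g *m ctr f) *m x = dot x f *: g.
Proof. by rewrite -mulmxA ctr_mulv mul_mx_scalar. Qed.

Lemma frameop_mul n N (F : 'I_N -> 'cV[C]_n) v :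
  frameop F *m v = \sum_i dot v (F i) *: F i.
Proof. by rewrite /frameop mulmx_suml; apply: eq_bigr => i _; rewrite rank1_mul. Qed.

Lemma frameop_herm n N (F : 'I_N -> 'cV[C]_n) : ctr (frameop F) = frameop F.
Proof. by rewrite /frameop ctr_sum; apply: eq_bigr => i _; rewrite ctrM ctrK. Qed.

Lemma sup_max (E : set R) m : E m -> (forall r, E r -> r <= m) -> sup E = m.
Proof.
move=> Em ub; apply/le_anti/andP; split.
  by apply: ge_sup; [exists m | move=> r /ub].
by apply: ub_le_sup => //; exists m => r /ub.
Qed.

Lemma sup_sub0 (E : set R) : (forall r, E r -> r = 0) -> sup E = 0.
Proof.
move=> h; have [[r Er]|] := pselect (exists r, E r).
  by apply: sup_max; [rewrite -(h r Er) | move=> s /h ->].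
move=> ne; have -> : E = set0 by apply/seteqP; split => x // Ex; case: ne; exists x.
exact: sup0.
Qed.

Lemma Im_realM (x : R) (z : C) : complex.Im (x%:C%C * z) = x * complex.Im z.
Proof. by case: z => p q /=; rewrite mul0r addr0. Qed.

Lemma opnorm_rank1 (isreal : bool) n (a : R) (g f : 'cV[C]_n) :
  0 <= a -> inH isreal f ->
  opnorm isreal ((Complex a 0) *: (g *m ctr f)) = a * vnorm g * vnorm f.
Proof.
move=> a0 Hf.
have val x : vnorm ((Complex a 0 *: (g *m ctr f)) *m x) = a * nc (dot x f) * vnorm g.
  rewrite -scalemxAl rank1_mul scalerA vnormZ Normc.normcM.
  by have -> : nc (Complex a 0) = a by rewrite -[Complex a 0]/(a%:C%C) normc_real ger0_norm.
apply: sup_max.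
  exists ((vnorm f)^-1%:C%C *: f).
    split.
      move: Hf; rewrite /inH; case: isreal => //= /forallP Hf; apply/forallP => k.
      by rewrite mxE; move: (Hf k); rewrite /realc Im_realM => /eqP ->; rewrite mulr0.
    rewrite vnormZ normc_real ger0_norm ?invr_ge0 ?vnorm_ge0 //.
    have [->|fn0] := eqVneq (vnorm f) 0; first by rewrite invr0 mul0r.
    by rewrite mulVf.
  apply/esym; rewrite val dotZl dot_vnorm -rmorphM normc_real ger0_norm; last first.
    by rewrite mulr_ge0 ?invr_ge0 ?exprn_ge0 ?vnorm_ge0.
  have [->|fn0] := eqVneq (vnorm f) 0; first by rewrite invr0; ring.
  by rewrite expr2 mulKf //; ring.
move=> r [x [_ x1] ->]; rewrite val mulrAC ler_wpM2l ?mulr_ge0 ?vnorm_ge0 //.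
apply: le_trans (CS x f) _.
by rewrite -[X in _ <= X]mul1r ler_wpM2r ?vnorm_ge0.
Qed.

Lemma rowmul_rank1 n (v : 'rV[C]_n) (g f : 'cV[C]_n) :
  v *m (g *m ctr f) = (v *m g) 0 0 *: ctr f.
Proof. by rewrite mulmxA {1}[v *m g]mx11_scalar mul_scalar_mx. Qed.

Lemma specrad_rank1 n (a : R) (g f : 'cV[C]_n) :
  0 <= a -> specrad ((Complex a 0) *: (g *m ctr f)) = a * nc (dot g f).
Proof.
move=> a0; set M := _ *: _.
have na : nc (Complex a 0) = a by rewrite -[Complex a 0]/(a%:C%C) normc_real ger0_norm.
have eig l : eigenvalue M l -> l = 0 \/ l = Complex a 0 * dot g f.
  move=> /eigenvalueP [v hv vn0].
  have [->|ln0] := eqVneq l 0; first by left.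
  right; move: hv; rewrite /M -scalemxAr rowmul_rank1 scalerA.
  set s := (v *m g) 0 0 => hv.
  have vE : v = (l^-1 * (Complex a 0 * s)) *: ctr f.
    by rewrite -scalerA hv scalerA mulVf // scale1r.
  have sE : s = l^-1 * (Complex a 0 * s) * dot g f.
    by rewrite {1}/s {1}vE -scalemxAl mxE -dotE.
  have sn0 : s != 0.
    apply: contra vn0 => /eqP s0; apply/eqP.
    by move: hv; rewrite s0 mulr0 scale0r => /esym /eqP; rewrite scaler_eq0 (negPf ln0) /= => /eqP.
  apply: (mulIf sn0); move: sE => /(congr1 (fun x => l * x)).
  rewrite !mulrA mulfV // mul1r => ->; ring.
have [z0|zn0] := eqVneq (a * nc (dot g f)) 0.
  rewrite z0; apply: sup_sub0 => r [l /eig [->|->] ->]; first by rewrite Normc.normc0.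
  by rewrite Normc.normcM na.
apply: sup_max.
  exists (Complex a 0 * dot g f); last by rewrite Normc.normcM na.
  apply/eigenvalueP; exists (ctr f).
    by rewrite /M -scalemxAr rowmul_rank1 -dotE scalerA.
  apply: contra zn0 => /eqP f0; apply/eqP.
  by rewrite dotE f0 mul0mx mxE Normc.normc0 mulr0.
move=> r [l /eig [->|->] ->]; last by rewrite Normc.normcM na.
by rewrite Normc.normc0 mulr_ge0 ?normc_ge0.
Qed.

Section AP.
Variables (isreal : bool) (n N : nat) (q : 'I_N -> R) (F : 'I_N -> 'cV[C]_n).

Definition T (G : 'I_N -> 'cV[C]_n) (i : 'I_N) :=
  (opnorm isreal (errop q F G [set i]) + specrad (errop q F G [set i])) / 2.

Lemma T_E G i : 0 <= q i -> inH isreal (F i) ->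
  T G i = (q i * vnorm (G i) * vnorm (F i) + q i * nc (dot (G i) (F i))) / 2.
Proof.
move=> q0 Hf; rewrite /T /errop big_set1 opnorm_rank1 // specrad_rank1 //.
Qed.

Lemma AP1_ge G i : T G i <= AP1 isreal q F G.
Proof.
rewrite /AP1 (bigD1 [set i]) ?cards1 //= le_max; apply/orP; left.
by rewrite /T.
Qed.

Lemma AP1_ge0 G : 0 <= AP1 isreal q F G.
Proof. by rewrite /AP1; elim/big_rec: _ => // L x _ hx; rewrite le_max hx orbT. Qed.

Lemma AP1_le G X : 0 <= X -> (forall i, T G i <= X) -> AP1 isreal q F G <= X.
Proof.
move=> X0 h; rewrite /AP1; elim/big_ind: _ => //.
  by move=> x y hx hy; rewrite ge_max hx hy.
by move=> L /cards1P [i ->]; exact: h i.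
Qed.

End AP.

Lemma bigmax_ge (I : finType) (f : I -> R) (i : I) : f i <= \big[Num.max/0]_(j : I) f j.
Proof. by rewrite (bigD1 i) //= le_max lexx. Qed.

Lemma bigmax_attained (I : finType) (f : I -> R) (i : I) :
  (forall j, 0 <= f j) -> exists j, \big[Num.max/0]_(j : I) f j = f j.
Proof.
move=> f0.
have : (\big[Num.max/0]_(j : I) f j = 0) \/ exists j, \big[Num.max/0]_(j : I) f j = f j.
  elim/big_ind: _; [by left | | by move=> j _; right; exists j].
  move=> x y [->|[j ->]] [->|[k ->]].
  - by left; rewrite maxxx.
  - by right; exists k; rewrite max_r.
  - by right; exists j; rewrite max_l.
  - by right; case: (leP (f j) (f k)) => _; [exists k | exists j].
case=> [h|//]; exists i; apply/le_anti; rewrite bigmax_ge andbT h //.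
Qed.

Definition realm m p (M : 'M[C]_(m, p)) := exists M' : 'M[R]_(m, p), M = map_mx rc M'.

Lemma realmM m p r (A : 'M[C]_(m, p)) (B : 'M[C]_(p, r)) : realm A -> realm B -> realm (A *m B).
Proof. by move=> [A' ->] [B' ->]; exists (A' *m B'); rewrite map_mxM. Qed.

Lemma realmD m p (A B : 'M[C]_(m, p)) : realm A -> realm B -> realm (A + B).
Proof. by move=> [A' ->] [B' ->]; exists (A' + B'); rewrite map_mxD. Qed.

Lemma realmZ m p (c : R) (A : 'M[C]_(m, p)) : realm A -> realm (c%:C%C *: A).
Proof. by move=> [A' ->]; exists (c *: A'); rewrite map_mxZ. Qed.

Lemma realm0 m p : realm (0 : 'M[C]_(m, p)).
Proof. by exists 0; rewrite map_mx0. Qed.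

Lemma realm_sum m p (I : finType) (P : pred I) (F : I -> 'M[C]_(m, p)) :
  (forall i, P i -> realm (F i)) -> realm (\sum_(i | P i) F i).
Proof.
move=> h; elim/big_rec: _ => [|i x Pi hx]; first exact: realm0.
by apply: realmD => //; apply: h.
Qed.

Lemma realm_ctr m p (A : 'M[C]_(m, p)) : realm A -> realm (ctr A).
Proof. by move=> [A' ->]; exists A'^T; apply/matrixP => i j; rewrite !mxE conjc_real. Qed.

Lemma realm_inv m (A : 'M[C]_m) : realm A -> realm (invmx A).
Proof. by move=> [A' ->]; exists (invmx A'); rewrite map_invmx. Qed.

Lemma realc_E (z : C) : realc z -> z = (complex.Re z)%:C%C.
Proof. by case: z => a b; rewrite /realc /= => /eqP ->. Qed.

Lemma realmP m (v : 'cV[C]_m) : realm v <-> inH true v.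
Proof.
split.
  by move=> [v' ->]; apply/forallP => k; rewrite mxE /realc.
move=> /forallP h; exists (map_mx (@complex.Re R) v); apply/matrixP => k j.
by rewrite (ord1 j) !mxE; apply: realc_E.
Qed.

Lemma inHP isreal m (v : 'cV[C]_m) : inH isreal v <-> (isreal -> realm v).
Proof.
case: isreal; split => //=.
- by move=> h _; apply/realmP.
- by move=> h; apply/realmP; apply: h.
Qed.

Lemma realv_decomp m (v : 'cV[C]_m) :
  v = map_mx (fun z => (complex.Re z)%:C%C) v + 'i%C *: map_mx (fun z => (complex.Im z)%:C%C) v.
Proof. by apply/matrixP => k j; rewrite !mxE /=; case: (v k j) => a b /=; simpc. Qed.

Lemma realm_Re m (v : 'cV[C]_m) : realm (map_mx (fun z => (complex.Re z)%:C%C) v).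
Proof. by exists (map_mx (@complex.Re R) v); apply/matrixP => k j; rewrite !mxE. Qed.

Lemma realm_Im m (v : 'cV[C]_m) : realm (map_mx (fun z => (complex.Im z)%:C%C) v).
Proof. by exists (map_mx (@complex.Im R) v); apply/matrixP => k j; rewrite !mxE. Qed.

Lemma real_i_eq0 m (x y : 'cV[C]_m) : realm x -> realm y -> x + 'i%C *: y = 0 -> x = 0 /\ y = 0.
Proof.
move=> [x' ->] [y' ->] /matrixP h; split; apply/matrixP => k j;
  have := h k j; rewrite !mxE /=; simpc; case=> a b; by rewrite ?a ?b.
Qed.

Lemma ctr_inv m (A : 'M[C]_m) : ctr (invmx A) = invmx (ctr A).
Proof. by rewrite /ctr trmx_inv map_invmx. Qed.

Section Frame.
Variables (isreal : bool) (n N : nat) (F : 'I_N -> 'cV[C]_n).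
Hypothesis HF : is_frame isreal F.
Local Notation S := (frameop F).

Lemma dotS v : dot (S *m v) v = \sum_i ((nc (dot v (F i))) ^+ 2)%:C%C.
Proof.
rewrite frameop_mul dot_suml; apply: eq_bigr => i _.
by rewrite dotZl (dotC v) mulcJ_norm.
Qed.

Lemma frame_inj_H v : inH isreal v -> S *m v = 0 -> v = 0.
Proof.
case: HF => _ [A [B [A0 [B0 hAB]]]] Hv Sv.
have := dotS v; rewrite Sv dot0l -rmorph_sum => /(congr1 (@complex.Re R)) /= /esym s0.
have := hAB v Hv; rewrite s0 => /andP [h _].
apply: vnorm_eq0; apply/eqP; rewrite -sqrf_eq0.
by rewrite eq_le sqr_ge0 andbT -(@ler_pM2l _ A) // mulr0.
Qed.

Lemma realm_F i : isreal -> realm (F i).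
Proof. by case: HF => hF _; move: (hF i); move/inHP. Qed.

Lemma realm_S : isreal -> realm S.
Proof.
move=> r; rewrite /frameop; apply: realm_sum => i _.
exact: (realmM (realm_F i r) (realm_ctr (realm_F i r))).
Qed.

Lemma frame_inj (v : 'cV[C]_n) : S *m v = 0 -> v = 0.
Proof.
case/boolP: isreal => r; last by apply: frame_inj_H; rewrite /inH (negPf r).
rewrite [v]realv_decomp mulmxDr -scalemxAr => h.
have [h1 h2] := real_i_eq0 (realmM (realm_S r) (realm_Re v)) (realmM (realm_S r) (realm_Im v)) h.
have Hr w : realm w -> inH isreal w by move=> hw; apply/inHP.
by rewrite (frame_inj_H (Hr _ _ (realm_Re v)) h1) (frame_inj_H (Hr _ _ (realm_Im v)) h2) scaler0 addr0.
Qed.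

Lemma frame_unit : S \in unitmx.
Proof.
rewrite -unitmx_tr unitmxE unitfE; apply/negP => /det0P [v vn0 hv].
have : S *m v^T = 0 by rewrite -[S]trmxK -trmx_mul hv trmx0.
move/frame_inj => /(congr1 trmx); rewrite trmxK trmx0 => v0.
by rewrite v0 eqxx in vn0.
Qed.

Lemma Sinv_herm : ctr (invmx S) = invmx S.
Proof. by rewrite ctr_inv frameop_herm. Qed.

Lemma recon1 f : \sum_i dot f (F i) *: (invmx S *m F i) = f.
Proof.
under eq_bigr do rewrite scalemxAr.
by rewrite -mulmx_sumr -frameop_mul mulKmx // frame_unit.
Qed.

Lemma recon2 f : \sum_i dot f (invmx S *m F i) *: F i = f.
Proof.
under eq_bigr do rewrite dot_mulr Sinv_herm.
by rewrite -frameop_mul mulKVmx // frame_unit.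
Qed.

Lemma cand_inH i : inH isreal (candual F i).
Proof.
apply/inHP => r; apply: realmM; last exact: realm_F.
by apply: realm_inv; apply: realm_S.
Qed.

End Frame.

Lemma col_dot N (a b : 'I_N -> C) :
  dot (\col_i a i) (\col_i b i) = \sum_i a i * conjc (b i).
Proof. by apply: eq_bigr => i _; rewrite !mxE. Qed.

Lemma vnorm_col N (a : 'I_N -> C) : vnorm (\col_i a i) ^+ 2 = \sum_i nc (a i) ^+ 2.
Proof. by rewrite vnorm2; apply: eq_bigr => i _; rewrite mxE. Qed.

Lemma nc_vnorm2 n (f : 'cV[C]_n) : nc (dot f f) = vnorm f ^+ 2.
Proof. by rewrite dot_vnorm normc_real ger0_norm // sqr_ge0. Qed.

Lemma dual_frame isreal n N (F G : 'I_N -> 'cV[C]_n) :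
  is_frame isreal F -> (forall i, inH isreal (G i)) ->
  (forall f, inH isreal f -> f = \sum_i dot f (G i) *: F i) -> is_frame isreal G.
Proof.
move=> [hF [A [B [A0 [B0 hAB]]]]] hG rec; split => //.
exists B^-1, (\sum_i vnorm (G i) ^+ 2 + 1); split; first by rewrite invr_gt0.
split; first by rewrite ltr_wpDl ?sumr_ge0 // => i _; rewrite sqr_ge0.
move=> f Hf; apply/andP; split; last first.
  rewrite mulrDl mul1r mulr_suml ler_wpDr ?sqr_ge0 // ler_sum // => i _.
  rewrite -exprMn mulrC ler_pXn2r ?nnegrE ?normc_ge0 ?mulr_ge0 ?vnorm_ge0 //.
  exact: CS.
set Sa := \sum_i _.
have Sa0 : 0 <= Sa by rewrite sumr_ge0 // => i _; rewrite sqr_ge0.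
have /andP [_ hB] := hAB f Hf.
set Sb := \sum_i _ in hB.
have e : dot f f = dot (\col_i dot f (G i)) (\col_i dot f (F i)).
  rewrite col_dot {1}(rec f Hf) dot_suml; apply: eq_bigr => i _.
  by rewrite dotZl [dot (F i) f]dotC.
have h1 : vnorm f ^+ 2 <= vnorm (\col_i dot f (G i)) * vnorm (\col_i dot f (F i)).
  by rewrite -nc_vnorm2 e CS.
have h2 : vnorm f ^+ 2 ^+ 2 <= Sa * (B * vnorm f ^+ 2).
  apply: le_trans (_ : (vnorm (\col_i dot f (G i)) * vnorm (\col_i dot f (F i))) ^+ 2 <= _).
    by rewrite ler_pXn2r ?nnegrE ?sqr_ge0 ?mulr_ge0 ?vnorm_ge0.
  rewrite exprMn vnorm_col vnorm_col -/Sa ler_wpM2l //.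
have [f0|fn0] := eqVneq (vnorm f) 0; first by rewrite f0 expr0n /= mulr0.
have fp : 0 < vnorm f ^+ 2 by rewrite exprn_gt0 // lt0r fn0 vnorm_ge0.
rewrite ler_pdivrMl // mulrC.
move: h2; set x := vnorm f ^+ 2 => h2; have xp : 0 < x by []. rewrite -(ler_pM2r xp). have ex : x ^+ 2 = x * x := expr2 x. have ex2 : Sa * (B * x) = Sa * B * x := mulrA _ _ _. by rewrite -ex -ex2.
Qed.

Lemma cand_dual isreal n N (F : 'I_N -> 'cV[C]_n) :
  is_frame isreal F -> is_dual isreal F (candual F).
Proof.
move=> HF; split.
  apply: (dual_frame HF (cand_inH HF)) => f _; by rewrite (recon2 HF).
by move=> f _; split; [rewrite (recon1 HF) | rewrite (recon2 HF)].
Qed.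

Lemma realmN m p (A : 'M[C]_(m, p)) : realm A -> realm (- A).
Proof. by move=> [A' ->]; exists (- A'); rewrite map_mxN. Qed.

Lemma realm_delta m (k : 'I_m) : realm (delta_mx k (0 : 'I_1)).
Proof.
exists (delta_mx k 0); apply/matrixP => a b; rewrite !mxE.
by case: (_ && _); rewrite /= ?rmorph1 ?rmorph0.
Qed.

Lemma dot_delta m (k : 'I_m) (u : 'cV[C]_m) : dot (delta_mx k 0) u = conjc (u k 0).
Proof.
rewrite /dot (bigD1 k) //= big1 ?addr0; first by rewrite mxE !eqxx mul1r.
by move=> j /negPf jk; rewrite mxE jk mul0r.
Qed.


End A.

Lemma dep_exists (K : fieldType) n N (g : 'I_N -> 'cV[K]_n) : (n < N)%N ->
  exists c : 'I_N -> K, (exists i, c i != 0) /\ \sum_i c i *: g i = 0.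
Proof.
move=> nN; pose M : 'M[K]_(N, n) := \matrix_(i, k) g i k 0.
have nf : ~~ row_free M.
  by rewrite -row_leq_rank -ltnNge (leq_ltn_trans (rank_leq_col M)).
pose w := nz_row (kermx M).
have w0 : w != 0 by rewrite nz_row_eq0 kermx_eq0.
have wM : w *m M = 0 by apply/sub_kermxP; exact: nz_row_sub.
exists (fun i => w 0 i); split.
  apply/existsP; apply: contraR w0 => /existsPn h; apply/eqP/rowP => i.
  by move: (h i); rewrite negbK mxE => /eqP.
apply/matrixP => k z; rewrite (ord1 z) summxE [RHS]mxE.
move/matrixP: wM => /(_ 0 k); rewrite !mxE => e; rewrite -[RHS]e.
by apply: eq_bigr => i _; rewrite !mxE.
Qed.

Section B.
Variable R : realType.
Local Notation C := (R[i]).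
Local Notation rc := (real_complex R).
Local Notation nc := (@Normc.normc R).

Lemma realH_map n (v : 'cV[C]_n) : inH true v -> v = map_mx rc (map_mx (@complex.Re R) v).
Proof.
move=> /forallP h; apply/matrixP => k z; rewrite (ord1 z) !mxE; exact: realc_E.
Qed.

Lemma dep_existsC isreal n N (F : 'I_N -> 'cV[C]_n) : (n < N)%N ->
  (forall i, inH isreal (F i)) ->
  exists c : 'I_N -> C, (forall i, scal isreal (c i)) /\ (exists i, c i != 0) /\
    \sum_i c i *: F i = 0.
Proof.
move=> nN hF; case: isreal hF => hF; last first.
  by have [cA [nzA sA]] := dep_exists F nN; exists cA; split => // j; rewrite /scal.
have [c [[i ci] s]] := dep_exists (fun i => map_mx (@complex.Re R) (F i)) nN.
exists (fun i => (c i)%:C%C); split; first by move=> j; rewrite /scal /realc /=.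
split; first by exists i; apply: contra ci => /eqP [->].
apply/matrixP => k z; rewrite summxE [RHS]mxE.
move/matrixP: s => /(_ k z); rewrite summxE mxE => s.
rewrite -[RHS](rmorph0 rc); rewrite -[in RHS]s rmorph_sum; apply: eq_bigr => j _.
by rewrite mxE [F j]realH_map // !mxE rmorphM.
Qed.

End B.

Section C.
Variable R : realType.
Local Notation C := (R[i]).
Local Notation rc := (real_complex R).
Local Notation nc := (@Normc.normc R).

Section Main.
Variables (isreal : bool) (n N : nat) (F : 'I_N -> 'cV[C]_n) (p : 'I_N -> R) (P : 'M[C]_n).
Hypotheses (HF : is_frame isreal F) (Hp : is_prob_seq p) (Hp1 : forall i, p i < 1)
  (HP : psd P) (HPP : P *m P = invmx (frameop F)).
Let q := weight n p.
Let val := fun i : 'I_N =>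
    q i * vnorm (P *m F i) ^+ 2
    + q i * vnorm (F i) * vnorm (invmx (frameop F) *m F i).
Let l := \big[Num.max/0]_(i : 'I_N) val i.
Let L1 := [set i : 'I_N | val i == l].
Let L2 := ~: L1.
Hypotheses (H12 : forall v : 'cV[C]_n, inspan isreal F L1 v -> inspan isreal F L2 v -> v = 0)
  (HLI : linindep isreal F L1).

Lemma q_ge0 i : 0 <= q i.
Proof.
rewrite /q /weight; case: Hp => _ ->; apply: mulr_ge0; last by rewrite divr_ge0.
by rewrite div1r invr_ge0 subr_ge0 ltW.
Qed.

Lemma val_ge0 i : 0 <= val i.
Proof. by rewrite /val; apply: addr_ge0; [apply: mulr_ge0; [apply: q_ge0 | apply: sqr_ge0] | apply: mulr_ge0; [apply: mulr_ge0; [apply: q_ge0 | apply: vnorm_ge0] | apply: vnorm_ge0]]. Qed.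

Lemma F_inH i : inH isreal (F i).
Proof. by case: HF. Qed.

Lemma T_cand i : T isreal q F (candual F) i = val i / 2.
Proof.
rewrite T_E ?q_ge0 ?F_inH //.
have -> : dot (candual F i) (F i) = dot (P *m F i) (P *m F i).
  by rewrite /candual -HPP -mulmxA (dot_mull P (P *m F i) (F i)); case: HP => ->.
rewrite nc_vnorm2 /val /candual; congr (_ / 2); ring.
Qed.

Lemma dual_L1 G : is_dual isreal F G -> forall i, i \in L1 -> G i = candual F i.
Proof.
move=> [[hG _] hrec] i iL1.
pose u := fun j => G j - candual F j.
have hu f : inH isreal f -> \sum_j dot f (u j) *: F j = 0.
  move=> Hf; have [_ e2] := hrec f Hf.
  under eq_bigr do rewrite dotBr scalerBl.
  by rewrite sumrB -e2 /candual (recon2 HF) subrr.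
have ureal j : isreal -> realm (u j).
  move=> r; apply: realmD; first by move: (hG j) => /inHP; apply.
  by apply: realmN; move: (cand_inH HF j) => /inHP; apply.
apply/eqP; rewrite -subr_eq0; apply/eqP/matrixP => k z; rewrite (ord1 z) [RHS]mxE.
pose d := fun j => dot (delta_mx k 0) (u j).
have dsc j : scal isreal (d j).
  rewrite /scal; apply/implyP => r; rewrite /d dot_delta.
  by have [u' ->] := ureal j r; rewrite mxE conjc_real /realc.
have hd : \sum_j d j *: F j = 0.
  by apply: hu; apply/inHP => _; apply: realm_delta.
pose v := \sum_(j in L1) d j *: F j.
have v0 : v = 0.
  apply: H12; first by exists d.
  exists (fun j => - d j); split; first by move=> j; rewrite /scal; move: (dsc j); rewrite /scal /realc; case: isreal => //= /eqP h; rewrite raddfN /= h oppr0.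
  move: hd; rewrite (bigID (fun j => j \in L1)) /= => /eqP; rewrite addr_eq0 => /eqP hv.
  rewrite /v hv -sumrN; apply: eq_big => j; first by rewrite /L2 finset.in_setC.
  by move=> _; rewrite scaleNr.
have := HLI dsc v0 iL1; rewrite /d dot_delta => /eqP.
by rewrite conjc_eq0 => /eqP.
Qed.

Lemma part1 G : is_dual isreal F G -> AP1 isreal q F (candual F) <= AP1 isreal q F G.
Proof.
move=> HG; apply: AP1_le; first exact: AP1_ge0.
move=> i; have [i0 li0] := bigmax_attained i val_ge0.
have i0L1 : i0 \in L1 by rewrite inE /l li0.
apply: (le_trans _ (AP1_ge isreal q F G i0)).
have e : G i0 = candual F i0 := dual_L1 HG i0L1.
have -> : T isreal q F G i0 = T isreal q F (candual F) i0 by rewrite /T /errop !big_set1 e.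
rewrite !T_cand; apply: ler_wpM2r; first by rewrite invr_ge0 ler0n.
rewrite -li0; exact: bigmax_ge.
Qed.


Lemma vanish_L1 d : (forall j, scal isreal (d j)) -> \sum_j d j *: F j = 0 ->
  forall i, i \in L1 -> d i = 0.
Proof.
move=> dsc hd i iL1.
pose v := \sum_(j in L1) d j *: F j.
have v0 : v = 0.
  apply: H12; first by exists d.
  exists (fun j => - d j); split; first by move=> j; rewrite /scal; move: (dsc j); rewrite /scal /realc; case: isreal => //= /eqP h; rewrite raddfN /= h oppr0.
  move: hd; rewrite (bigID (fun j => j \in L1)) /= => /eqP; rewrite addr_eq0 => /eqP hv.
  rewrite /v hv -sumrN; apply: eq_big => j; first by rewrite /L2 finset.in_setC.
  by move=> _; rewrite scaleNr.
exact: (HLI dsc v0 iL1).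
Qed.

Lemma conjRM (a : R) (z : C) : conjc (a%:C%C * z) = a%:C%C * conjc z.
Proof. by case: z => x y; simpc. Qed.

Lemma normc_conj (z : C) : nc (conjc z) = nc z.
Proof. by case: z => a b /=; rewrite sqrrN. Qed.

Lemma Npos : (n < N)%N -> (0 < n)%N.
Proof.
move=> nN; case: (posnP n) => // n0.
have [i0 li0] := bigmax_attained (Ordinal nN) val_ge0.
have i0L1 : i0 \in L1 by rewrite inE /l li0.
have all0 : forall v : 'cV[C]_n, v = 0.
  by move=> v; apply/matrixP => k; have := ltn_ord k; rewrite {2}n0.
have := @HLI (fun _ => 1) _ (all0 _) i0 i0L1.
rewrite /scal /realc => /(_ (fun j => introT implyP (fun _ => eqxx _))) /eqP.
by rewrite oner_eq0.
Qed.

Lemma part2 : (n < N)%N -> exists G : 'I_N -> 'cV[C]_n,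
                  PASOD1 isreal q F G /\ exists i, G i != candual F i.
Proof.
move=> nN; have n0 := Npos nN.
have [c [csc [[j cj] cs]]] := dep_existsC nN F_inH.
have cL1 := vanish_L1 csc cs.
have jL1 : j \notin L1 by apply: contra cj => /cL1 ->.
pose h : 'cV[C]_n := delta_mx (Ordinal n0) 0.
have hn : vnorm h = 1.
  by apply: vnorm_uniq => //; rewrite dot_delta mxE !eqxx /= expr1n oppr0.
have hH : inH isreal h by apply/inHP => _; apply: realm_delta.
pose K := \sum_i q i * nc (c i) * vnorm (F i).
have Kt i : 0 <= q i * nc (c i) * vnorm (F i).
  by apply: mulr_ge0; [apply: mulr_ge0; [apply: q_ge0 | apply: normc_ge0] | apply: vnorm_ge0].
have K0 : 0 <= K by apply: sumr_ge0 => i _.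
have Kle i : q i * nc (c i) * vnorm (F i) <= K.
  by rewrite /K (bigD1 i) //= ler_wpDr // sumr_ge0.
pose dl := \big[Num.min/1]_(i : 'I_N) (if i \in L1 then 1 else l - val i).
have dpos : 0 < dl.
  rewrite /dl; elim/big_ind: _ => //; first by move=> x y hx hy; rewrite lt_min hx hy.
  move=> i _; case: ifP => // /negbT iL; rewrite subr_gt0 lt_neqAle bigmax_ge andbT.
  by move: iL; rewrite inE.
have dle i : i \notin L1 -> dl <= l - val i.
  by move=> /negPf iL; rewrite /dl (bigD1 i) //= iL ge_min lexx.
pose e := dl / (2 * (K + 1)).
have K1 : 0 < 2 * (K + 1) by rewrite mulr_gt0 ?ltr0n // ltr_wpDl.
have epos : 0 < e by rewrite divr_gt0.
have eK : 2 * e * K <= dl.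
  have edl : e * (2 * (K + 1)) = dl by rewrite /e mulfVK // lt0r_neq0.
  rewrite -edl (_ : e * (2 * (K + 1)) = 2 * e * K + 2 * e); last by ring.
  by rewrite lerDl mulr_ge0 ?ler0n ?ltW.
pose x i := (e%:C%C * conjc (c i)).
pose G i := candual F i + x i *: h.
have xreal i : isreal -> realc (x i).
  move=> r; move: (csc i); rewrite /scal r /= /realc => /eqP ci0.
  by rewrite /x Im_realM; case: (c i) ci0 => a b /= ->; rewrite oppr0 mulr0.
have Greal i : inH isreal (G i).
  apply/inHP => r; apply: realmD; first by move: (cand_inH HF i) => /inHP; apply.
  by rewrite (realc_E (xreal i r)); apply: realmZ; move: hH => /inHP; apply.
have R1 f : \sum_i dot f (F i) *: G i = f.
  under eq_bigr do rewrite scalerDr scalerA.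
  rewrite big_split /= (recon1 HF) -scaler_suml.
  have -> : \sum_i dot f (F i) * x i = e%:C%C * conjc (dot (\sum_i c i *: F i) f).
    rewrite dot_suml rmorph_sum mulr_sumr; apply: eq_bigr => k _.
    by rewrite /x dotZl [dot (F k) f]dotC !rmorphM /= conjcK'; ring.
  by rewrite cs dot0l rmorph0 mulr0 scale0r addr0.
have R2 f : \sum_i dot f (G i) *: F i = f.
  under eq_bigr do rewrite dotDr dotZr scalerDl.
  rewrite big_split /= (recon2 HF).
  have -> : \sum_i (conjc (x i) * dot f h) *: F i = (e%:C%C * dot f h) *: \sum_i c i *: F i.
    rewrite scaler_sumr; apply: eq_bigr => i _; rewrite scalerA /x conjRM conjcK'.
    by congr (_ *: _); ring.
  by rewrite cs scaler0 addr0.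
have HG : is_dual isreal F G.
  split; first by apply: (dual_frame HF Greal) => f _; rewrite R2.
  by move=> f _; rewrite R1 R2.
have [i0 li0] := bigmax_attained j val_ge0.
have AP1c : l / 2 <= AP1 isreal q F (candual F).
  by rewrite /l li0 -T_cand; apply: AP1_ge.
have TG i : T isreal q F G i <= l / 2.
  have hv := T_cand i; rewrite T_E ?q_ge0 ?F_inH // in hv.
  rewrite T_E ?q_ge0 ?F_inH //; apply: ler_wpM2r; first by rewrite invr_ge0 ler0n.
  have nx : nc (x i) = e * nc (c i).
    by rewrite /x Normc.normcM normc_real normc_conj ger0_norm // ltW.
  have b1 : vnorm (G i) <= vnorm (candual F i) + e * nc (c i).
    by apply: le_trans (vnormD _ _) _; rewrite vnormZ hn mulr1 nx.
  have b2 : nc (dot (G i) (F i)) <= nc (dot (candual F i) (F i)) + e * nc (c i) * vnorm (F i).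
    rewrite dotDl dotZl; apply: le_trans (le_normcD _ _) _; rewrite lerD2l Normc.normcM nx.
    apply: ler_wpM2l; first exact: mulr_ge0 (ltW epos) (normc_ge0 _).
    by apply: le_trans (CS _ _) _; rewrite hn mul1r.
  have qi := q_ge0 i.
  have : q i * vnorm (G i) * vnorm (F i) + q i * nc (dot (G i) (F i)) <=
         val i + 2 * e * (q i * nc (c i) * vnorm (F i)).
    have hv2 : q i * vnorm (candual F i) * vnorm (F i) + q i * nc (dot (candual F i) (F i)) = val i.
      by apply: (mulIf (_ : 2^-1 != 0)); rewrite ?invr_eq0 ?pnatr_eq0.
    rewrite -hv2.
    have t1 : q i * vnorm (G i) * vnorm (F i) <= q i * (vnorm (candual F i) + e * nc (c i)) * vnorm (F i).
      by rewrite ler_wpM2r ?vnorm_ge0 // ler_wpM2l.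
    have t2 : q i * nc (dot (G i) (F i)) <= q i * (nc (dot (candual F i) (F i)) + e * nc (c i) * vnorm (F i)).
      by rewrite ler_wpM2l.
    apply: le_trans (lerD t1 t2) _; rewrite le_eqVlt; apply/orP; left; apply/eqP; ring.
  move=> hb; apply: le_trans hb _.
  case/boolP: (i \in L1) => iL.
    by rewrite cL1 // Normc.normc0 mulr0 mul0r mulr0 addr0; move: iL; rewrite inE => /eqP ->.
  rewrite -lerBrDl; apply: le_trans (dle i iL).
  by apply: le_trans eK; apply: ler_wpM2l; [apply: mulr_ge0; [apply: ler0n | apply: ltW] | apply: Kle].
exists G; split.
  split; first exact: HG.
  move=> G' HG'; apply: (le_trans _ (part1 HG')).
  apply: AP1_le; first by apply: (le_trans _ AP1c); rewrite divr_ge0 // /l li0 val_ge0.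
  by move=> i; apply: le_trans (TG i) AP1c.
exists j; apply/eqP => hj.
have : x j *: h = 0 by apply: (addrI (candual F j)); rewrite addr0.
move/eqP; rewrite scaler_eq0 => /orP [].
  by rewrite /x mulf_eq0 conjc_eq0 (negPf cj) orbF -(rmorph0 rc) (inj_eq (@complexI R)) (negPf (lt0r_neq0 epos)).
by move=> /eqP h0; move: hn; rewrite h0 vnorm0 => /eqP; rewrite eq_sym oner_eq0.
Qed.

End Main.

End C.

Unset Implicit Arguments. Set Strict Implicit. Set Printing Implicit Defensive.

Theorem theorem3p9 (R : realType) (isreal : bool) (n N : nat)
  (F : 'I_N -> 'cV[R[i]]_n) (p : 'I_N -> R)
  (P : 'M[R[i]]_n) (* P = S_F^{-1/2} *) :
  is_frame isreal F ->
  is_prob_seq p ->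
  (forall i, p i < 1) ->
  psd P -> P *m P = invmx (frameop F) ->
  let q := weight n p in
  let val := fun i : 'I_N =>
    q i * vnorm (P *m F i) ^+ 2
    + q i * vnorm (F i) * vnorm (invmx (frameop F) *m F i) in
  let l := \big[Num.max/0]_(i : 'I_N) val i in
  let L1 := [set i : 'I_N | val i == l] in
  let L2 := ~: L1 in
  (forall v : 'cV[R[i]]_n, inspan isreal F L1 v -> inspan isreal F L2 v -> v = 0) ->
  linindep isreal F L1 ->
  PASOD1 isreal q F (candual F) /\
  ((n < N)%N -> exists G : 'I_N -> 'cV[R[i]]_n,
                  PASOD1 isreal q F G /\ exists i, G i != candual F i).
Proof.
move=> HF Hp Hp1 HP HPP q val l L1 L2 H12 HLI.
split.
  split; first exact: cand_dual HF.
  by move=> G' HG'; exact: (part1 HF Hp Hp1 HP HPP H12 HLI HG').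
exact: (part2 HF Hp Hp1 HP HPP H12 HLI).
Qed.
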